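(* Let $X$ be a symmetric sequence space and $E$ a Banach sequence lattice on which all shifts $\tau_n$, $n\in\mathbb Z$, are bounded, with $k_-(E)<1$, such that $a\in X$ iff $\sum_{k=0}^\infty a^*_{2^k}e_{k+1}\in E$ and $\|a\|_X\asymp\|\sum_{k=0}^\infty a^*_{2^k}e_{k+1}\|_E$. Then the lower Boyd index satisfies $\alpha_X>0$.
   Context: A Banach sequence lattice is a Banach space $E$ of real sequences such that $x\in E$, $|y_k|\le|x_k|$ imply $y\in E$, $\|y\|_E\le\|x\|_E$. $u^*$ is the nonincreasing rearrangement of $(|u_k|)$. A symmetric sequence space is a Banach sequence lattice $X\subset\ell^\infty$ such that $x\in X$, $y^*=x^*$ imply $y\in X$, $\|y\|_X=\|x\|_X$; standing assumption: $X$ is separable or has the Fatou property. $\tau_nx=(x_{k-n})_{k\ge1}$, $x_j:=0$ for $j\notin\mathbb N$; $k_-(E)=\lim_n\|\tau_{-n}\|_E^{1/n}$. For $m\in\mathbb N$, $\sigma_{1/m}a=(\frac1m\sum_{k=(n-1)m+1}^{nm}a_k)_{n\ge1}$ and $\alpha_X=-\lim_{m\to\infty}\frac{\log_2\|\sigma_{1/m}\|_X}{\log_2m}$. $f\asymp g$ means two-sided estimates with constants independent of the arguments. *)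

(* Defs.v *)
From Stdlib Require Import Reals Lra Lia ZArith List.
From Coquelicot Require Import Coquelicot.
Open Scope R_scope.

(* Real sequences.  Index i : nat here stands for the paper's index i+1. *)
Definition seqR := nat -> R.

Definition sq_zero : seqR := fun _ => 0.
Definition sq_add (x y : seqR) : seqR := fun k => x k + y k.
Definition sq_sub (x y : seqR) : seqR := fun k => x k - y k.
Definition sq_scal (c : R) (x : seqR) : seqR := fun k => c * x k.

Definition sq_bounded (x : seqR) : Prop := exists M, forall k, Rabs (x k) <= M.

Definition is_banach_seq_lattice (E : seqR -> Prop) (nrm : seqR -> R) : Prop :=
  E sq_zero /\
  (forall x y, E x -> E y -> E (sq_add x y)) /\
  (forall c x, E x -> E (sq_scal c x)) /\
  (forall x, E x -> 0 <= nrm x) /\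
  (forall x, E x -> nrm x = 0 -> forall k, x k = 0) /\
  (forall c x, E x -> nrm (sq_scal c x) = Rabs c * nrm x) /\
  (forall x y, E x -> E y -> nrm (sq_add x y) <= nrm x + nrm y) /\
  (forall s : nat -> seqR, (forall n, E (s n)) ->
     (forall eps, 0 < eps -> exists N, forall m n, (N <= m)%nat -> (N <= n)%nat ->
         nrm (sq_sub (s m) (s n)) < eps) ->
     exists x, E x /\ forall eps, 0 < eps -> exists N, forall n, (N <= n)%nat ->
         nrm (sq_sub (s n) x) < eps) /\
  (forall x y, E x -> (forall k, Rabs (y k) <= Rabs (x k)) -> E y /\ nrm y <= nrm x).

(* "#{k : |u_k| > lam} <= i" *)
Definition count_gt_le (u : seqR) (lam : R) (i : nat) : Prop :=
  forall l : list nat, NoDup l -> List.Forall (fun k => lam < Rabs (u k)) l -> (length l <= i)%nat.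

(* nonincreasing rearrangement: rearr u i = u^*_{i+1}
   = inf { lam >= 0 : #{k : |u_k| > lam} < i+1 }  (meaningful for bounded u) *)
Definition rearr (u : seqR) : seqR :=
  fun i => real (Glb_Rbar (fun lam => 0 <= lam /\ count_gt_le u lam i)).

Definition separable_sp (X : seqR -> Prop) (nrm : seqR -> R) : Prop :=
  exists d : nat -> seqR, (forall n, X (d n)) /\
    forall x, X x -> forall eps, 0 < eps -> exists n, nrm (sq_sub x (d n)) < eps.

Definition fatou_prop (X : seqR -> Prop) (nrm : seqR -> R) : Prop :=
  forall (s : nat -> seqR) (x : seqR),
    (forall n, X (s n)) ->
    (forall n k, 0 <= s n k <= s (S n) k) ->
    (forall k, is_lim_seq (fun n => s n k) (x k)) ->
    (exists M, forall n, nrm (s n) <= M) ->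
    X x /\ is_lim_seq (fun n => nrm (s n)) (nrm x).

Definition is_symmetric_seq_space (X : seqR -> Prop) (nrm : seqR -> R) : Prop :=
  is_banach_seq_lattice X nrm /\
  (exists x, X x /\ exists k, x k <> 0) /\
  (forall x, X x -> sq_bounded x) /\
  (forall x y, X x -> sq_bounded y -> rearr y = rearr x -> X y /\ nrm y = nrm x) /\
  (separable_sp X nrm \/ fatou_prop X nrm).

(* seq_shift tau_n x = (x_{k-n})_k, x_j = 0 outside the index range *)
Definition seq_shift (n : Z) (x : seqR) : seqR :=
  fun i => let j := (Z.of_nat i - n)%Z in
           if (0 <=? j)%Z then x (Z.to_nat j) else 0.

Definition opnorm (E : seqR -> Prop) (nrm : seqR -> R) (T : seqR -> seqR) : R :=
  real (Lub_Rbar (fun r => exists x, E x /\ nrm x <= 1 /\ r = nrm (T x))).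

Definition bounded_op (E : seqR -> Prop) (nrm : seqR -> R) (T : seqR -> seqR) : Prop :=
  exists C, forall x, E x -> E (T x) /\ nrm (T x) <= C * nrm x.

Definition k_minus (E : seqR -> Prop) (nrm : seqR -> R) : Rbar :=
  Lim_seq (fun n => Rpower (opnorm E nrm (seq_shift (- Z.of_nat n)%Z)) (/ INR n)).

(* sigma_{1/m} a = (1/m sum_{k=(n-1)m+1}^{nm} a_k)_n *)
Definition sigma_avg (m : nat) (a : seqR) : seqR :=
  fun i => / INR m * sum_f_R0 (fun j => a (i * m + j)%nat) (pred m).

Definition boyd_alpha (X : seqR -> Prop) (nrm : seqR -> R) : Rbar :=
  Rbar_opp (Lim_seq (fun m => ln (opnorm X nrm (sigma_avg m)) / ln (INR m))).

(* sum_{k>=0} a^*_{2^k} e_{k+1} : the sequence whose k-th entry (paper index k+1)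
   is a^*_{2^k} (paper index 2^k, i.e. our index 2^k - 1) *)
Definition dyadic_seq (a : seqR) : seqR := fun k => rearr a (2 ^ k - 1)%nat.

(* Main.v *)
Require Import Defs.
From Stdlib Require Import Reals ZArith.
From Coquelicot Require Import Coquelicot.
From Stdlib Require Import Lra Lia List FunctionalExtensionality Classical_Prop.
Import Defs.
Open Scope R_scope.

Lemma rearr_nonneg u i : 0 <= rearr u i.
Proof.
  unfold rearr.
  destruct (Glb_Rbar_correct (fun lam => 0 <= lam /\ count_gt_le u lam i)) as [Hlb Hg].
  assert (H0 : Rbar_le 0 (Glb_Rbar (fun lam => 0 <= lam /\ count_gt_le u lam i))).
  { apply Hg. intros x [Hx _]. simpl. exact Hx. }
  destruct (Glb_Rbar _); simpl in *; lra.
Qed.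

Lemma rearr_le u i lam : 0 <= lam -> count_gt_le u lam i -> rearr u i <= lam.
Proof.
  intros H0 Hc. unfold rearr.
  destruct (Glb_Rbar_correct (fun lam => 0 <= lam /\ count_gt_le u lam i)) as [Hlb Hg].
  assert (H1 : Rbar_le 0 (Glb_Rbar (fun lam => 0 <= lam /\ count_gt_le u lam i))).
  { apply Hg. intros x [Hx _]. simpl. exact Hx. }
  assert (H2 := Hlb lam (conj H0 Hc)).
  destruct (Glb_Rbar _); simpl in *; lra.
Qed.

Lemma list_min_gt (f : nat -> R) g l :
  List.Forall (fun k => g < f k) l -> exists mu, g < mu /\ List.Forall (fun k => mu <= f k) l.
Proof.
  induction l as [|x l IH]; intros H.
  - exists (g+1). split; [lra| constructor].
  - inversion H; subst. destruct (IH H3) as [mu [Hm Hf]].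
    exists (Rmin mu (f x)). split.
    + apply Rmin_case; lra.
    + constructor. apply Rmin_r.
      eapply Forall_impl; [|exact Hf]. intros a Ha. simpl in Ha. 
      apply Rle_trans with mu; [apply Rmin_l|exact Ha].
Qed.

Lemma count_mono u lam lam' i : lam <= lam' -> count_gt_le u lam i -> count_gt_le u lam' i.
Proof.
  intros Hl Hc l Hn Hf. apply Hc; auto. eapply Forall_impl; [|exact Hf].
  intros a Ha; simpl in *; lra.
Qed.

Lemma rearr_count u i : sq_bounded u -> count_gt_le u (rearr u i) i.
Proof.
  intros [M HM] l Hn Hf.
  destruct (list_min_gt (fun k => Rabs (u k)) _ l Hf) as [mu [Hmu Hf2]].
  set (S := fun lam => 0 <= lam /\ count_gt_le u lam i).
  assert (HS : S (Rmax M 0)).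
  { split. apply Rmax_r. intros l' _ Hf'. destruct l' as [|x l'].
    simpl; lia. inversion Hf'; subst. specialize (HM x).
    assert (Rmax M 0 >= M) by (apply Rle_ge, Rmax_l). lra. }
  destruct (Glb_Rbar_correct S) as [Hlb Hg].
  assert (Hex : exists lam, S lam /\ lam < mu).
  { destruct (Classical_Prop.classic (exists lam, S lam /\ lam < mu)) as [H|H]; auto.
    exfalso.
    assert (Hl : Rbar_le mu (Glb_Rbar S)).
    { apply Hg. intros x Hx. simpl. destruct (Rle_lt_dec mu x); auto.
      exfalso; apply H; eauto. }
    assert (H2 := Hlb _ HS).
    unfold rearr in Hmu. fold S in Hmu.
    destruct (Glb_Rbar S); simpl in *; lra. }
  destruct Hex as [lam [[H0 Hc] Hlt]].
  apply Hc; auto. eapply Forall_impl; [|exact Hf2]. intros a Ha; simpl in *; lra.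
Qed.

Definition rleb (x y : R) : bool := if Rle_dec x y then true else false.

Lemma rleb_true x y : rleb x y = true <-> x <= y.
Proof. unfold rleb; destruct (Rle_dec x y); split; intros; auto; try discriminate; lra. Qed.
Lemma rleb_false x y : rleb x y = false <-> y < x.
Proof. unfold rleb; destruct (Rle_dec x y); split; intros; auto; try discriminate; lra. Qed.

Lemma blk_inj x y i j m : (i < m)%nat -> (j < m)%nat -> (x*m+i = y*m+j)%nat -> x = y.
Proof.
  intros Hi Hj He. destruct (Nat.lt_total x y) as [H|[H|H]]; auto; exfalso.
  - assert (x*m + m <= y*m)%nat. { replace (x*m+m)%nat with ((S x)*m)%nat by lia.
      apply Nat.mul_le_mono_r; lia. } lia.
  - assert (y*m + m <= x*m)%nat. { replace (y*m+m)%nat with ((S y)*m)%nat by lia.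
      apply Nat.mul_le_mono_r; lia. } lia.
Qed.

Lemma NoDup_map_in {A B} (f : A -> B) l : NoDup l ->
  (forall x y, In x l -> In y l -> f x = f y -> x = y) -> NoDup (map f l).
Proof.
  induction l as [|x l IH]; intros Hn Hi; simpl; constructor.
  - inversion Hn; subst. intros Hin. apply in_map_iff in Hin as [y [Hy Hy2]].
    assert (y = x) by (apply Hi; simpl; auto). subst. contradiction.
  - inversion Hn; subst. apply IH; auto. intros; apply Hi; simpl; auto.
Qed.

Lemma NoDup_flat_map' {A B} (g : A -> list B) l : NoDup l ->
  (forall x, In x l -> NoDup (g x)) ->
  (forall x y e, In x l -> In y l -> In e (g x) -> In e (g y) -> x = y) ->
  NoDup (flat_map g l).
Proof.
  induction l as [|x l IH]; intros Hn Hg Hi; simpl; [constructor|].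
  inversion Hn; subst. apply NoDup_app.
  - apply Hg; simpl; auto.
  - apply IH; auto.
    + intros; apply Hg; simpl; auto.
    + intros x0 y0 e0 G1 G2 G3 G4. apply (Hi x0 y0 e0); simpl; auto.
  - intros e He1 He2. apply in_flat_map in He2 as [y [Hy Hey]].
    assert (x = y) by (apply (Hi x y e); simpl; auto). subst. contradiction.
Qed.

Lemma length_flat_map_ge {A B} (g : A -> list B) l c :
  (forall x, In x l -> (c <= length (g x))%nat) -> (length l * c <= length (flat_map g l))%nat.
Proof.
  induction l as [|x l IH]; intros H; simpl; [lia|].
  rewrite length_app. assert (c <= length (g x))%nat by (apply H; simpl; auto).
  assert (length l * c <= length (flat_map g l))%nat by (apply IH; intros; apply H; simpl; auto).
  lia.
Qed.

Lemma sum_ind (g : nat -> bool) n :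
  sum_f_R0 (fun j => if g j then 1 else 0) n = INR (length (filter g (seq 0 (S n)))).
Proof.
  induction n as [|n IH].
  - simpl. destruct (g 0%nat); simpl; lra.
  - rewrite seq_S, filter_app, length_app. simpl sum_f_R0. rewrite IH, plus_INR.
    simpl. destruct (g (S n)); simpl; lra.
Qed.

Lemma sum_lin (f : nat -> R) c d n :
  sum_f_R0 (fun j => c + d * f j) n = c * INR (S n) + d * sum_f_R0 f n.
Proof.
  induction n as [|n IH]; [simpl; lra|]. simpl sum_f_R0. rewrite IH. rewrite (S_INR (S n)). lra.
Qed.

Definition good (a : seqR) (m : nat) (B : R) (x : nat) : bool :=
  forallb (fun j => rleb (Rabs (a (x*m+j)%nat)) B) (seq 0 m).

Definition cnt (a : seqR) (m : nat) (be : R) (x : nat) : list nat :=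
  filter (fun j => negb (rleb (Rabs (a (x*m+j)%nat)) be)) (seq 0 m).

Lemma mass_bound a m x be B : (1 <= m)%nat -> 0 <= be -> 0 <= B -> good a m B x = true ->
  Rabs (sigma_avg m a x) <= be + B * INR (length (cnt a m be x)) / INR m.
Proof.
  intros Hm Hbe HB Hg. unfold sigma_avg.
  assert (HmR : 0 < INR m) by (apply lt_0_INR; lia).
  rewrite Rabs_mult, Rabs_right by (apply Rle_ge, Rlt_le, Rinv_0_lt_compat; lra).
  assert (Hs : sum_f_R0 (fun j => Rabs (a (x*m+j)%nat)) (pred m) <=
     sum_f_R0 (fun j => be + B * (if negb (rleb (Rabs (a (x*m+j)%nat)) be) then 1 else 0)) (pred m)).
  { apply sum_Rle. intros j Hj.
    unfold good in Hg. rewrite forallb_forall in Hg.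
    assert (Hin : In j (seq 0 m)) by (apply in_seq; lia).
    specialize (Hg j Hin). apply rleb_true in Hg.
    destruct (rleb (Rabs (a (x * m + j)%nat)) be) eqn:E; simpl.
    - apply rleb_true in E; lra.
    - lra. }
  rewrite sum_lin in Hs.
  rewrite (sum_ind (fun j => negb (rleb (Rabs (a (x*m+j)%nat)) be))) in Hs.
  replace (S (pred m)) with m in Hs by lia. fold (cnt a m be x) in Hs.
  assert (H1 := Rsum_abs (fun j => a (x*m+j)%nat) (pred m)).
  apply Rle_trans with (/ INR m * (be * INR m + B * INR (length (cnt a m be x)))).
  - apply Rmult_le_compat_l; [apply Rlt_le, Rinv_0_lt_compat; lra| lra].
  - right. field. lra.
Qed.

Lemma sigma_count a m k J : sq_bounded a -> (1 <= m)%nat ->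
  count_gt_le (sigma_avg m a)
    (rearr a (2^(k+J) - 1)%nat + 2 * 2^J / INR m * rearr a (2^(pred k) - 1)%nat) (2^k - 1)%nat.
Proof.
  intros Hb Hm L Hn Hf.
  set (be := rearr a (2^(k+J) - 1)%nat). set (B := rearr a (2^(pred k) - 1)%nat).
  assert (Hbe : 0 <= be) by apply rearr_nonneg. assert (HB : 0 <= B) by apply rearr_nonneg.
  assert (HmR : 0 < INR m) by (apply lt_0_INR; lia).
  rewrite List.Forall_forall in Hf.
  destruct (le_lt_dec (length L) (2^k-1)) as [Hl|Hl]; [exact Hl|exfalso].
  set (Lg := filter (good a m B) L).
  set (Lb := filter (fun x => negb (good a m B x)) L).
  assert (Hlen := filter_length (good a m B) L). fold Lg Lb in Hlen.
  set (w := fun x => (x*m + match find (fun j => negb (rleb (Rabs (a (x*m+j)%nat)) B)) (seq 0 m)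
                      with Some j => j | None => 0 end)%nat).
  assert (Hw : forall x, exists j, (j < m)%nat /\ w x = (x*m+j)%nat).
  { intros x. unfold w. destruct (find _ _) as [j|] eqn:E.
    - apply find_some in E as [E _]. apply in_seq in E. exists j; split; [lia|auto].
    - exists 0%nat; split; [lia|auto]. }
  assert (Hb1 : (length Lb <= 2^(pred k) - 1)%nat).
  { rewrite <- (length_map w).
    apply (rearr_count a (2^(pred k) - 1)%nat Hb).
    - apply NoDup_map_in. apply NoDup_filter; auto.
      intros x y _ _ Hxy. destruct (Hw x) as [i [Hi Ei]]. destruct (Hw y) as [j [Hj Ej]].
      rewrite Ei, Ej in Hxy. exact (blk_inj x y i j m Hi Hj Hxy).
    - apply List.Forall_forall. intros e He. apply in_map_iff in He as [x [Hx Hx2]].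
      apply filter_In in Hx2 as [_ Hx2]. apply Bool.negb_true_iff in Hx2.
      subst e. unfold w. destruct (find _ _) as [j|] eqn:E.
      + apply find_some in E as [_ E]. apply Bool.negb_true_iff in E. apply rleb_false in E.
        exact E.
      + exfalso. assert (Hn2 := find_none _ _ E).
        unfold good in Hx2. rewrite <- Bool.not_true_iff_false in Hx2. apply Hx2.
        apply forallb_forall. intros j Hj. specialize (Hn2 j Hj).
        apply Bool.negb_false_iff in Hn2. exact Hn2. }
  set (G := flat_map (fun x => map (fun j => (x*m+j)%nat) (cnt a m be x)) Lg).
  assert (Hg1 : (length G <= 2^(k+J) - 1)%nat).
  { apply (rearr_count a (2^(k+J) - 1)%nat Hb).
    - apply NoDup_flat_map'.
      + apply NoDup_filter; auto.
      + intros x _. apply NoDup_map_in. apply NoDup_filter, seq_NoDup.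
        intros i j _ _ H; lia.
      + intros x y e _ _ Hx Hy. apply in_map_iff in Hx as [i [Hi Hi2]].
        apply in_map_iff in Hy as [j [Hj Hj2]]. unfold cnt in Hi2, Hj2.
        apply filter_In in Hi2 as [Hi2 _]. apply filter_In in Hj2 as [Hj2 _].
        apply in_seq in Hi2. apply in_seq in Hj2.
        apply (blk_inj x y i j m); lia.
    - apply List.Forall_forall. intros e He.
      apply in_flat_map in He as [x [_ He]]. apply in_map_iff in He as [j [Hj Hj2]].
      unfold cnt in Hj2. apply filter_In in Hj2 as [_ Hj2]. apply Bool.negb_true_iff in Hj2.
      apply rleb_false in Hj2. subst e. exact Hj2. }
  assert (Hg2 : (length Lg * (2 * 2^J + 1) <= length G)%nat).
  { apply length_flat_map_ge. intros x Hx. rewrite length_map.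
    apply filter_In in Hx as [HxL Hgx].
    destruct (le_lt_dec (length (cnt a m be x)) (2 * 2^J)) as [Hc|Hc]; [exfalso|lia].
    assert (H1 := mass_bound a m x be B Hm Hbe HB Hgx).
    specialize (Hf x HxL).
    assert (Hc' : INR (length (cnt a m be x)) <= 2 * 2^J).
    { replace (2 * 2^J) with (INR (2 * 2^J)).
      - apply le_INR; exact Hc.
      - rewrite mult_INR, pow_INR. replace (INR 2) with 2 by (simpl; lra). reflexivity. }
    assert (B * INR (length (cnt a m be x)) / INR m <= 2 * 2 ^ J / INR m * B).
    { assert (B * INR (length (cnt a m be x)) <= B * (2*2^J)) by (apply Rmult_le_compat_l; auto).
      assert (0 < / INR m) by (apply Rinv_0_lt_compat; auto).
      unfold Rdiv; apply Rle_trans with (B*(2*2^J) * / INR m);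
        [apply Rmult_le_compat_r; lra | right; ring]. }
    fold be B in Hf. lra. }
  assert (HP : (1 <= 2^(pred k))%nat) by (apply Nat.le_succ_l, Nat.neq_0_lt_0, Nat.pow_nonzero; lia).
  assert (HQ : (1 <= 2^J)%nat) by (apply Nat.le_succ_l, Nat.neq_0_lt_0, Nat.pow_nonzero; lia).
  rewrite Nat.pow_add_r in Hg1.
  destruct k as [|k].
  - simpl in *. nia.
  - simpl pred in *. rewrite Nat.pow_succ_r' in Hl, Hg1. nia.
Qed.

Definition lsh (n : nat) (x : seqR) : seqR := fun i => x (i + n)%nat.

Lemma shift_neg n x : Defs.seq_shift (- Z.of_nat n)%Z x = lsh n x.
Proof.
  apply functional_extensionality; intros i. unfold Defs.seq_shift, lsh.
  replace (Z.of_nat i - - Z.of_nat n)%Z with (Z.of_nat (i+n)) by lia.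
  replace (0 <=? Z.of_nat (i + n))%Z with true by (symmetry; apply Z.leb_le; lia).
  rewrite Nat2Z.id. reflexivity.
Qed.

Lemma shift_one x i : Defs.seq_shift 1%Z x i = match i with O => 0 | S i' => x i' end.
Proof.
  unfold Defs.seq_shift. destruct i as [|i].
  - reflexivity.
  - replace (Z.of_nat (S i) - 1)%Z with (Z.of_nat i) by lia.
    replace (0 <=? Z.of_nat i)%Z with true by (symmetry; apply Z.leb_le; lia).
    rewrite Nat2Z.id. reflexivity.
Qed.

Lemma shift_scal n c x : Defs.seq_shift n (sq_scal c x) = sq_scal c (Defs.seq_shift n x).
Proof.
  apply functional_extensionality; intros i. unfold Defs.seq_shift, sq_scal.
  destruct (0 <=? _)%Z; ring.
Qed.

Lemma nrm_zero E nE : is_banach_seq_lattice E nE -> nE sq_zero = 0.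
Proof.
  intros (E0 & Eadd & Escal & Nnn & Nzero & Nhom & _).
  replace sq_zero with (sq_scal 0 sq_zero) by
    (apply functional_extensionality; intros i; unfold sq_scal, sq_zero; ring).
  rewrite Nhom by auto. rewrite Rabs_R0. ring.
Qed.

Lemma opnorm_bound E nE n : is_banach_seq_lattice E nE -> bounded_op E nE (Defs.seq_shift n) ->
  forall x, E x -> E (Defs.seq_shift n x) /\ nE (Defs.seq_shift n x) <= opnorm E nE (Defs.seq_shift n) * nE x.
Proof.
  intros HE [C HC] x Hx. split; [apply HC; auto|].
  assert (HE' := HE). destruct HE' as (E0 & Eadd & Escal & Nnn & Nzero & Nhom & Ntri & Ncomp & Nlat).
  set (S := fun r => exists x, E x /\ nE x <= 1 /\ r = nE (Defs.seq_shift n x)).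
  assert (Hub : forall r, S r -> r <= Rmax C 0).
  { intros r [y [Hy [Hy1 ->]]]. destruct (HC y Hy) as [_ H].
    assert (0 <= nE y) by auto. apply Rle_trans with (C * nE y); auto.
    destruct (Rle_dec 0 C).
    - rewrite Rmax_left by lra. replace C with (C*1) at 2 by ring. apply Rmult_le_compat_l; auto.
    - rewrite Rmax_right by lra. nra. }
  assert (HS0 : S (nE (Defs.seq_shift n sq_zero))) by (exists sq_zero; split; auto; rewrite (nrm_zero E nE HE); split; [lra|auto]).
  destruct (Lub_Rbar_correct S) as [Hu Hl].
  assert (Hfin : Rbar_le (Lub_Rbar S) (Rmax C 0)).
  { apply Hl. intros r Hr. simpl. apply Hub; auto. }
  assert (Hmem : forall r, S r -> r <= opnorm E nE (Defs.seq_shift n)).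
  { intros r Hr. unfold opnorm. fold S. assert (H := Hu r Hr).
    destruct (Lub_Rbar S); simpl in *; try lra; contradiction. }
  destruct (Req_dec (nE x) 0) as [Hz|Hz].
  - assert (Hx0 := Nzero x Hx Hz).
    assert (Hle : nE (Defs.seq_shift n x) <= nE sq_zero).
    { apply (Nlat sq_zero (Defs.seq_shift n x) E0). intros k. unfold Defs.seq_shift, sq_zero.
      destruct (0 <=? _)%Z; [rewrite Hx0|]; rewrite Rabs_R0; lra. }
    rewrite (nrm_zero E nE HE) in Hle. rewrite Hz. assert (0 <= nE (Defs.seq_shift n x)) by (apply Nnn, HC; auto).
    lra.
  - assert (Hp : 0 < nE x) by (assert (0 <= nE x) by auto; lra).
    set (x' := sq_scal (/ nE x) x).
    assert (Hx' : E x') by (apply Escal; auto).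
    assert (Hn' : nE x' = 1).
    { unfold x'. rewrite Nhom by auto. rewrite Rabs_right by (apply Rle_ge, Rlt_le, Rinv_0_lt_compat; auto).
      field; lra. }
    assert (HS : S (nE (Defs.seq_shift n x'))) by (exists x'; repeat split; auto; lra).
    specialize (Hmem _ HS). unfold x' in Hmem. rewrite shift_scal in Hmem.
    rewrite Nhom in Hmem by (apply HC; auto).
    rewrite Rabs_right in Hmem by (apply Rle_ge, Rlt_le, Rinv_0_lt_compat; auto).
    apply Rmult_le_compat_r with (r := nE x) in Hmem; [|lra].
    replace (/ nE x * nE (Defs.seq_shift n x) * nE x) with (nE (Defs.seq_shift n x)) in Hmem by (field; lra).
    exact Hmem.
Qed.

Lemma lsh_iter E nE N rho : 0 <= rho ->
  (forall x, E x -> E (lsh N x) /\ nE (lsh N x) <= rho * nE x) ->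
  forall q x, E x -> E (lsh (q*N) x) /\ nE (lsh (q*N) x) <= rho^q * nE x.
Proof.
  intros Hr H q. induction q as [|q IH]; intros x Hx.
  - simpl. replace (lsh 0 x) with x. split; auto; lra.
    apply functional_extensionality; intros i; unfold lsh; f_equal; lia.
  - replace (lsh (S q * N) x) with (lsh N (lsh (q*N) x)).
    + destruct (IH x Hx) as [H1 H2]. destruct (H _ H1) as [H3 H4]. split; auto.
      simpl. apply Rle_trans with (rho * (rho^q * nE x)); [|lra].
      apply Rle_trans with (rho * nE (lsh (q*N) x)); auto. apply Rmult_le_compat_l; auto.
    + apply functional_extensionality; intros i; unfold lsh; f_equal; lia.
Qed.

Lemma sigma_bounded a m : (1 <= m)%nat -> sq_bounded a -> sq_bounded (sigma_avg m a).
Proof.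
  intros Hm [M HM]. exists M. intros i. unfold sigma_avg.
  assert (HmR : 0 < INR m) by (apply lt_0_INR; lia).
  rewrite Rabs_mult, Rabs_right by (apply Rle_ge, Rlt_le, Rinv_0_lt_compat; lra).
  assert (H1 := Rsum_abs (fun j => a (i*m+j)%nat) (pred m)).
  assert (H2 : sum_f_R0 (fun j => Rabs (a (i*m+j)%nat)) (pred m) <= sum_f_R0 (fun _ => M) (pred m))
    by (apply sum_Rle; intros; auto).
  rewrite sum_cte in H2. replace (S (pred m)) with m in H2 by lia.
  apply Rle_trans with (/ INR m * (M * INR m)).
  - apply Rmult_le_compat_l; [apply Rlt_le, Rinv_0_lt_compat; lra| lra].
  - right; field; lra.
Qed.

Lemma main_est X nX E nE :
  is_symmetric_seq_space X nX -> is_banach_seq_lattice E nE ->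
  (forall a, sq_bounded a -> (X a <-> E (dyadic_seq a))) ->
  forall c C, 0 < c -> 0 < C ->
  (forall a, X a -> c * nE (dyadic_seq a) <= nX a /\ nX a <= C * nE (dyadic_seq a)) ->
  forall K1, 0 <= K1 ->
  (forall x, E x -> E (Defs.seq_shift 1 x) /\ nE (Defs.seq_shift 1 x) <= K1 * nE x) ->
  forall N rho, 0 <= rho ->
  (forall x, E x -> E (lsh N x) /\ nE (lsh N x) <= rho * nE x) ->
  forall a, X a -> forall m q, (1 <= m)%nat ->
   X (sigma_avg m a) /\
   nX (sigma_avg m a) <= C / c * (rho^q + 2 * 2^(q*N) / INR m * (K1 + 1)) * nX a.
Proof.
  intros HX HE Hchar c C Hc HC Hn K1 HK1 Hsh1 N rho Hrho Hit a Ha m q Hm.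
  assert (HE' := HE). destruct HE' as (E0 & Eadd & Escal & Nnn & Nzero & Nhom & Ntri & Ncomp & Nlat).
  destruct HX as (_ & _ & Xbd & _ & _).
  assert (Hab := Xbd a Ha).
  set (b := dyadic_seq a).
  assert (Eb : E b) by (apply Hchar; auto).
  set (J := (q*N)%nat).
  assert (HmR : 0 < INR m) by (apply lt_0_INR; lia).
  set (co := 2 * 2^J / INR m).
  assert (Hco : 0 <= co).
  { unfold co. unfold Rdiv. apply Rmult_le_pos; [|apply Rlt_le, Rinv_0_lt_compat; lra].
    apply Rmult_le_pos; [lra|]. apply pow_le; lra. }
  destruct (lsh_iter E nE N rho Hrho Hit q b Eb) as [EJ NJ]. fold J in EJ, NJ.
  destruct (Hsh1 b Eb) as [E1 N1].
  set (Y := sq_add (lsh J b) (sq_scal co (sq_add (Defs.seq_shift 1 b) b))).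
  assert (EY : E Y) by (apply Eadd; auto).
  set (D := dyadic_seq (sigma_avg m a)).
  assert (Hbnn : forall k, 0 <= b k) by (intros; apply rearr_nonneg).
  assert (HDY : forall k, Rabs (D k) <= Rabs (Y k)).
  { intros k. rewrite Rabs_right by (apply Rle_ge, rearr_nonneg).
    assert (Hs1 : b (pred k) <= Defs.seq_shift 1 b k + b k).
    { rewrite shift_one. destruct k; simpl; [|specialize (Hbnn (S k))]; lra. }
    assert (HYk : Y k = b (k + J)%nat + co * (Defs.seq_shift 1 b k + b k)) by reflexivity.
    assert (0 <= Defs.seq_shift 1 b k) by (rewrite shift_one; destruct k; [lra|apply Hbnn]).
    assert (0 <= b (k+J)%nat) by apply Hbnn.
    rewrite Rabs_right by (rewrite HYk; apply Rle_ge; specialize (Hbnn k); nra).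
    unfold D, dyadic_seq.
    eapply Rle_trans.
    - apply rearr_le; [|apply (sigma_count a m k J Hab Hm)].
      apply Rplus_le_le_0_compat; [apply rearr_nonneg|]. apply Rmult_le_pos; [exact Hco|apply rearr_nonneg].
    - rewrite HYk. fold co. unfold b, dyadic_seq at 1. 
      apply Rplus_le_compat_l. apply Rmult_le_compat_l; auto. }
  destruct (Nlat Y D EY HDY) as [ED ND].
  assert (Hsb := sigma_bounded a m Hm Hab).
  assert (XS : X (sigma_avg m a)) by (apply Hchar; auto).
  split; auto.
  destruct (Hn _ XS) as [_ H1]. destruct (Hn _ Ha) as [H2 _]. fold D in H1. fold b in H2.
  assert (NY : nE Y <= rho^q * nE b + co * (K1 * nE b + nE b)).
  { unfold Y. eapply Rle_trans; [apply Ntri; auto|].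
    apply Rplus_le_compat; auto. rewrite Nhom by auto. rewrite Rabs_right by lra.
    apply Rmult_le_compat_l; auto. eapply Rle_trans; [apply Ntri; auto|]. lra. }
  assert (Hb2 : nE b <= nX a / c) by (apply Rmult_le_reg_l with c; auto; unfold Rdiv; 
     replace (c * (nX a * / c)) with (nX a) by (field; lra); lra).
  assert (0 <= nE b) by auto.
  assert (0 <= rho^q) by (apply pow_le; auto).
  unfold co in NY.
  set (T := rho ^ q + 2 * 2 ^ (q * N) / INR m * (K1 + 1)).
  assert (HT : rho ^ q * nE b + 2 * 2 ^ J / INR m * (K1 * nE b + nE b) = T * nE b) by (unfold T, J; ring).
  assert (HT0 : 0 <= T) by (unfold T; fold J; fold co; nra).
  apply Rle_trans with (C * (T * nE b)); [nra|].
  apply Rle_trans with (C * (T * (nX a / c))).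
  - apply Rmult_le_compat_l; [lra|]. apply Rmult_le_compat_l; auto.
  - right. unfold T, co, J. field. lra.
Qed.

Lemma opnorm_between X nX T B r0 :
  (forall x, X x -> nX x <= 1 -> nX (T x) <= B) ->
  (exists x, X x /\ nX x <= 1 /\ nX (T x) = r0) -> r0 <= opnorm X nX T <= B.
Proof.
  intros HB [x0 [Hx0 [Hn0 Hr0]]]. unfold opnorm.
  set (S := fun r => exists x, X x /\ nX x <= 1 /\ r = nX (T x)).
  destruct (Lub_Rbar_correct S) as [Hu Hl].
  assert (H1 : Rbar_le (Lub_Rbar S) B).
  { apply Hl. intros r [x [Hx [Hn ->]]]. simpl. auto. }
  assert (H2 : Rbar_le r0 (Lub_Rbar S)) by (apply Hu; exists x0; auto).
  destruct (Lub_Rbar S); simpl in *; try contradiction; lra.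
Qed.

Lemma sum_ge_term f n j : (forall i, (i <= n)%nat -> 0 <= f i) -> (j <= n)%nat -> f j <= sum_f_R0 f n.
Proof.
  revert j; induction n as [|n IH]; intros j H Hj.
  - replace j with 0%nat by lia. simpl; apply Rle_refl.
  - simpl. destruct (Nat.eq_dec j (S n)) as [->|Hne].
    + assert (0 <= sum_f_R0 f n).
      { apply Rle_trans with (f 0%nat); [apply H; lia|apply IH; [intros; apply H; lia|lia]]. }
      lra.
    + assert (f j <= sum_f_R0 f n) by (apply IH; [intros; apply H; lia|lia]).
      assert (0 <= f (S n)) by (apply H; lia). lra.
Qed.

Lemma lim_aux A d : is_lim_seq (fun m => A / ln (INR m) - d) (- d).
Proof.
  assert (H1 : is_lim_seq (fun m => ln (INR m)) p_infty).
  { apply (filterlim_comp _ _ _ INR ln _ _ _ is_lim_seq_INR is_lim_ln_p). }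
  assert (H2 := is_lim_seq_inv _ _ H1 ltac:(discriminate)). simpl in H2.
  assert (H3 := is_lim_seq_scal_l _ A _ H2). simpl in H3.
  assert (H4 := is_lim_seq_plus' _ _ _ _ H3 (is_lim_seq_const (- d))).
  replace (- d) with (A * 0 + - d) by ring.
  eapply is_lim_seq_ext; [|exact H4]. intros n. simpl. unfold Rdiv. ring.
Qed.

Theorem corollary4p3
  (X : seqR -> Prop) (nX : seqR -> R) (E : seqR -> Prop) (nE : seqR -> R) :
  is_symmetric_seq_space X nX ->
  is_banach_seq_lattice E nE ->
  (forall n : Z, bounded_op E nE (seq_shift n)) ->
  Rbar_lt (k_minus E nE) 1 ->
  (forall a : seqR, sq_bounded a -> (X a <-> E (dyadic_seq a))) ->
  (exists c C : R, 0 < c /\ 0 < C /\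
     forall a : seqR, X a ->
       c * nE (dyadic_seq a) <= nX a /\ nX a <= C * nE (dyadic_seq a)) ->
  Rbar_lt 0 (boyd_alpha X nX).
Proof.
  intros HX HE Hsh Hk Hchar [c [C [Hc [HC Hn]]]].
  assert (HE' := HE). destruct HE' as (E0 & Eadd & Escal & Nnn & Nzero & Nhom & Ntri & Ncomp & Nlat).
  assert (HK1 := opnorm_bound E nE 1 HE (Hsh 1%Z)).
  set (K1 := Rmax (opnorm E nE (Defs.seq_shift 1)) 0).
  assert (HK10 : 0 <= K1) by apply Rmax_r.
  assert (Hsh1 : forall x, E x -> E (Defs.seq_shift 1 x) /\ nE (Defs.seq_shift 1 x) <= K1 * nE x).
  { intros x Hx. destruct (HK1 x Hx) as [H1 H2]. split; auto.
    eapply Rle_trans; [exact H2|]. apply Rmult_le_compat_r; auto. apply Rmax_l. }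
  assert (HN : exists N, (1 <= N)%nat /\ 0 < opnorm E nE (Defs.seq_shift (- Z.of_nat N)%Z) < 1).
  { destruct (classic (exists N, (1 <= N)%nat /\ 0 < opnorm E nE (Defs.seq_shift (- Z.of_nat N)%Z) < 1))
      as [H|H]; auto. exfalso.
    assert (Hle : Rbar_le (Lim_seq (fun _ => 1)) (k_minus E nE)).
    { unfold k_minus. apply Lim_seq_le_loc. exists 1%nat. intros n Hn1.
      set (x := opnorm E nE (Defs.seq_shift (- Z.of_nat n)%Z)).
      destruct (Rle_lt_dec 1 (Rpower x (/ INR n))) as [h|h]; auto.
      exfalso. apply H. exists n. split; auto.
      unfold Rpower in h. rewrite <- exp_0 in h. apply exp_lt_inv in h.
      assert (0 < / INR n) by (apply Rinv_0_lt_compat, lt_0_INR; lia).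
      assert (Hl : ln x < 0) by nra.
      destruct (Rlt_dec 0 x) as [hp|hp].
      - split; auto. apply ln_lt_inv; auto; [lra|]. rewrite ln_1. exact Hl.
      - exfalso. unfold ln in Hl. destruct (Rlt_dec 0 x); [contradiction|lra]. }
    rewrite Lim_seq_const in Hle. destruct (k_minus E nE); simpl in *; lra. }
  destruct HN as [N [HN1 [Hr0 Hr1]]].
  set (rho := opnorm E nE (Defs.seq_shift (- Z.of_nat N)%Z)) in *.
  assert (Hit : forall x, E x -> E (lsh N x) /\ nE (lsh N x) <= rho * nE x).
  { intros x Hx. rewrite <- shift_neg. apply opnorm_bound; auto. }
  assert (H2N : 2 <= 2^N).
  { replace 2 with (2^1) at 1 by ring. apply Rle_pow; [lra|lia]. }
  set (th := Rmax rho (/ 2^N)).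
  assert (Hth1 : rho <= th) by apply Rmax_l.
  assert (Hth2 : / 2^N <= th) by apply Rmax_r.
  assert (Hinv : 0 < / 2^N < 1).
  { split. apply Rinv_0_lt_compat; lra. assert (/ 2^N <= / 2) by (apply Rinv_le_contravar; lra). lra. }
  assert (Hth3 : 0 < th < 1).
  { split; [lra|]. unfold th. apply Rmax_lub_lt; lra. }
  set (K0 := C / c * (1 + 2 * (K1 + 1))).
  assert (HK0 : 0 < K0).
  { unfold K0. apply Rmult_lt_0_compat; [apply Rdiv_lt_0_compat; auto|lra]. }
  assert (Hmain := main_est X nX E nE HX HE Hchar c C Hc HC Hn K1 HK10 Hsh1 N rho (Rlt_le _ _ Hr0) Hit).
  assert (Hkey : forall m q, (1 <= m)%nat -> (2^(2*q*N) <= m)%nat ->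
            forall a, X a -> nX a <= 1 -> nX (sigma_avg m a) <= K0 * th^q).
  { intros m q Hm Hq a Ha Ha1.
    destruct (Hmain a Ha m q Hm) as [_ Hb].
    assert (HnXa : 0 <= nX a) by (destruct HX as ((_ & _ & _ & XN & _) & _); auto).
    assert (HmR : 0 < INR m) by (apply lt_0_INR; lia).
    set (P := 2^(q*N)) in *.
    assert (HP0 : 0 < P) by (apply pow_lt; lra).
    assert (Hm2 : P * P <= INR m).
    { apply Rle_trans with (INR (2^(2*q*N))).
      - rewrite pow_INR. replace (INR 2) with 2 by (simpl; lra). unfold P.
        rewrite <- pow_add. right. f_equal. lia.
      - apply le_INR; exact Hq. }
    assert (HPi : / P <= th^q).
    { replace (/ P) with ((/ 2^N)^q).
      - apply pow_incr; lra.
      - rewrite pow_inv. unfold P. rewrite <- pow_mult. f_equal. f_equal. lia. }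
    assert (HPm : P / INR m <= / P).
    { apply Rle_trans with (P / (P * P)).
      - unfold Rdiv. apply Rmult_le_compat_l; [lra|]. apply Rinv_le_contravar; nra.
      - right. field. lra. }
    assert (Hrq : rho^q <= th^q) by (apply pow_incr; lra).
    assert (Hthq : 0 < th^q) by (apply pow_lt; lra).
    assert (Hbr : rho ^ q + 2 * P / INR m * (K1 + 1) <= th^q * (1 + 2 * (K1 + 1))).
    { assert (2 * P / INR m = 2 * (P / INR m)) by (unfold Rdiv; ring).
      rewrite H. assert (P / INR m * (K1+1) <= th^q * (K1+1)) by (apply Rmult_le_compat_r; lra).
      nra. }
    assert (HCc : 0 < C / c) by (apply Rdiv_lt_0_compat; auto).
    assert (0 <= rho^q) by (apply pow_le; lra).
    assert (0 <= 2 * P / INR m * (K1 + 1)).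
    { unfold Rdiv. apply Rmult_le_pos; [|lra]. apply Rmult_le_pos; [lra|]. apply Rlt_le, Rinv_0_lt_compat; lra. }
    eapply Rle_trans; [exact Hb|]. unfold K0.
    apply Rle_trans with (C / c * (th ^ q * (1 + 2 * (K1 + 1))) * 1).
    - apply Rmult_le_compat; try lra.
      + apply Rmult_le_pos; lra.
      + apply Rmult_le_compat_l; lra.
    - right; ring. }
  assert (Hpos : forall m, (1 <= m)%nat -> exists x, X x /\ nX x <= 1 /\ 0 < nX (sigma_avg m x)).
  { intros m Hm.
    assert (HX' := HX). destruct HX' as ((X0 & Xadd & Xscal & Xnn & Xzero & Xhom & Xtri & Xcomp & Xlat)
       & [x0 [Hx0 [k0 Hk0]]] & _ & _ & _).
    set (y := fun k => if Nat.eqb k k0 then Rabs (x0 k0) else 0).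
    assert (Hy : X y).
    { apply (Xlat x0 y Hx0). intros k. unfold y. destruct (Nat.eqb_spec k k0).
      - subst. rewrite Rabs_Rabsolu. lra.
      - rewrite Rabs_R0. apply Rabs_pos. }
    assert (Hyk : y k0 = Rabs (x0 k0)) by (unfold y; rewrite Nat.eqb_refl; auto).
    assert (Hypos : 0 < Rabs (x0 k0)) by (apply Rabs_pos_lt; auto).
    assert (Hy0 : forall k, 0 <= y k).
    { intros k. unfold y. destruct (Nat.eqb k k0); [apply Rabs_pos|lra]. }
    assert (HnY : 0 < nX y).
    { assert (0 <= nX y) by auto. destruct (Req_dec (nX y) 0) as [H0|H0]; [|lra].
      exfalso. assert (H1 := Xzero y Hy H0 k0). lra. }
    set (z := sq_scal (/ nX y) y).
    assert (Hz : X z) by (apply Xscal; auto).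
    assert (Hnz : nX z = 1).
    { unfold z. rewrite Xhom by auto. rewrite Rabs_right by (apply Rle_ge, Rlt_le, Rinv_0_lt_compat; auto).
      field; lra. }
    exists z. split; auto. split; [lra|].
    destruct (Hmain z Hz m 0%nat Hm) as [Hsz _].
    assert (0 <= nX (sigma_avg m z)) by auto.
    destruct (Req_dec (nX (sigma_avg m z)) 0) as [H0|H0]; [|lra].
    exfalso. assert (H1 := Xzero _ Hsz H0 (k0 / m)%nat).
    unfold sigma_avg in H1.
    assert (HmR : 0 < INR m) by (apply lt_0_INR; lia).
    assert (Hdm : ((k0 / m) * m + k0 mod m)%nat = k0).
    { rewrite Nat.mul_comm. symmetry. apply Nat.div_mod. lia. }
    assert (Hmod : (k0 mod m <= pred m)%nat).
    { assert (k0 mod m < m)%nat by (apply Nat.mod_upper_bound; lia). lia. }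
    assert (Hge := sum_ge_term (fun j => z (k0 / m * m + j)%nat) (pred m) (k0 mod m)).
    simpl in Hge. rewrite Hdm in Hge.
    assert (Hzk : 0 < z k0).
    { unfold z, sq_scal. rewrite Hyk. apply Rmult_lt_0_compat; auto. apply Rinv_0_lt_compat; auto. }
    assert (Hz0 : forall i, 0 <= z i).
    { intros i. unfold z, sq_scal. apply Rmult_le_pos; auto. apply Rlt_le, Rinv_0_lt_compat; auto. }
    specialize (Hge (fun i _ => Hz0 _) Hmod).
    assert (0 < / INR m) by (apply Rinv_0_lt_compat; auto).
    nra. }
  assert (Hln2 : 0 < ln 2) by (assert (H := ln_lt_2); lra).
  assert (Hlth : ln th < 0) by (rewrite <- ln_1; apply ln_increasing; lra).
  set (t := - ln th).
  assert (Ht : 0 < t) by (unfold t; lra).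
  assert (HNR : 1 <= INR N) by (replace 1 with (INR 1) by reflexivity; apply le_INR; lia).
  set (s := 2 * INR N * ln 2).
  assert (Hs : 0 < s) by (unfold s; apply Rmult_lt_0_compat; [lra|auto]).
  set (d := t / s).
  assert (Hd : 0 < d) by (apply Rdiv_lt_0_compat; auto).
  set (A := ln K0 - ln th).
  assert (Hev : forall m, (2 <= m)%nat ->
      ln (opnorm X nX (sigma_avg m)) / ln (INR m) <= A / ln (INR m) - d).
  { intros m Hm2.
    set (q := (Nat.log2 m / (2*N))%nat).
    assert (Hlg := Nat.log2_spec m ltac:(lia)).
    assert (Hdiv := Nat.div_mod (Nat.log2 m) (2*N) ltac:(lia)). fold q in Hdiv.
    assert (Hmodb := Nat.mod_upper_bound (Nat.log2 m) (2*N) ltac:(lia)).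
    assert (Hq1 : (2^(2*q*N) <= m)%nat).
    { apply Nat.le_trans with (2^(Nat.log2 m))%nat; [apply Nat.pow_le_mono_r; lia | lia]. }
    assert (Hq2 : (m < 2^(2*N*(q+1)))%nat).
    { apply Nat.lt_le_trans with (2^(S (Nat.log2 m)))%nat; [lia| apply Nat.pow_le_mono_r; lia]. }
    destruct (Hpos m ltac:(lia)) as [x [Hx [Hx1 Hxp]]].
    destruct (opnorm_between X nX (sigma_avg m) (K0 * th^q) _ (Hkey m q ltac:(lia) Hq1)
       (ex_intro _ x (conj Hx (conj Hx1 eq_refl)))) as [Hlo Hhi].
    set (op := opnorm X nX (sigma_avg m)) in *.
    assert (Hop : 0 < op) by lra.
    assert (Hlnop : ln op <= ln K0 + INR q * ln th).
    { rewrite <- ln_pow by lra. rewrite <- ln_mult by (try apply pow_lt; lra). apply ln_le; auto. }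
    assert (HmR : 1 < INR m) by (replace 1 with (INR 1) by reflexivity; apply lt_INR; lia).
    assert (HL : 0 < ln (INR m)) by (rewrite <- ln_1; apply ln_increasing; lra).
    assert (HLs : ln (INR m) < (INR q + 1) * s).
    { apply Rlt_le_trans with (ln (INR (2^(2*N*(q+1))))).
      - apply ln_increasing; [lra|]. apply lt_INR; exact Hq2.
      - rewrite pow_INR. replace (INR 2) with 2 by (simpl; lra). rewrite ln_pow by lra.
        unfold s. rewrite !mult_INR, plus_INR. replace (INR 2) with 2 by (simpl;lra).
        replace (INR 1) with 1 by reflexivity. right. ring. }
    assert (Hlnth : ln th = - t) by (unfold t; ring).
    assert (Hkey2 : d * ln (INR m) <= (INR q + 1) * t).
    { unfold d. apply Rle_trans with (t / s * ((INR q + 1) * s)).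
      - apply Rmult_le_compat_l; [apply Rlt_le, Rdiv_lt_0_compat; lra| lra].
      - right. field. lra. }
    apply Rmult_le_reg_r with (ln (INR m)); auto.
    replace ((A / ln (INR m) - d) * ln (INR m)) with (A - d * ln (INR m)) by (field; lra).
    replace (ln op / ln (INR m) * ln (INR m)) with (ln op) by (field; lra).
    unfold A. rewrite Hlnth in *. nra. }
  assert (Hlim : Rbar_le (Lim_seq (fun m => ln (opnorm X nX (sigma_avg m)) / ln (INR m))) (-d)).
  { rewrite <- (is_lim_seq_unique _ _ (lim_aux A d)). apply Lim_seq_le_loc.
    exists 2%nat. intros; apply Hev; auto. }
  unfold boyd_alpha. destruct (Lim_seq _); simpl in *; auto; lra.
Qed.
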